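(* Let $G$ be a finite group. The following statements are equivalent: (a) $G$ is abelian; (b) $\mathcal B(G)$ is a Krull monoid; (c) $\mathcal B(G)$ is a transfer Krull monoid.
   Context: Let $G$ be a finite group written multiplicatively with identity $1_G$. $\mathcal F(G)$ denotes the free abelian monoid with basis $G$; its elements are sequences $S=g_1\boldsymbol{\cdot}\ldots\boldsymbol{\cdot}g_\ell$ (unordered, repetitions allowed, operation $\boldsymbol{\cdot}$ = concatenation). $\pi(S)=\{g_{\tau(1)}\cdots g_{\tau(\ell)}:\tau\text{ a permutation of }[1,\ell]\}$, $\pi(\text{empty sequence})=\{1_G\}$, and $\mathcal B(G)=\{S\in\mathcal F(G):1_G\in\pi(S)\}$. All monoids are commutative and cancellative. A monoid homomorphism $\varphi:H\to D$ is a divisor homomorphism if $\varphi(a)\mid\varphi(b)$ implies $a\mid b$. A monoid $H$ is a Krull monoid if there is a divisor homomorphism from $H$ into a free abelian monoid. A monoid homomorphism $\theta:H\to B$ is a transfer homomorphism if (T1) $B=\theta(H)B^\times$ and $\theta^{-1}(B^\times)=H^\times$, and (T2) whenever $u\in H$, $b,c\in B$ and $\theta(u)=bc$, there exist $v,w\in H$ with $u=vw$, $\theta(v)B^\times=bB^\times$ and $\theta(w)B^\times=cB^\times$. A monoid $H$ is a transfer Krull monoid if there exists a transfer homomorphism from $H$ to a Krull monoid. *)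

(* Defs.v *)
From Stdlib Require Import List FunctionalExtensionality ProofIrrelevance.
From HB Require Import structures.
From mathcomp Require Import all_boot all_fingroup.
Set Implicit Arguments. Unset Strict Implicit. Unset Printing Implicit Defensive.

Record cmonoid := CMonoid {
  mcar :> Type;
  mop : mcar -> mcar -> mcar;
  mone : mcar;
  mopA : forall a b c, mop a (mop b c) = mop (mop a b) c;
  mopC : forall a b, mop a b = mop b a;
  mop1 : forall a, mop mone a = a;
  mopK : forall a b c, mop a b = mop a c -> b = c
}.

Definition mdvd (H : cmonoid) (a b : H) : Prop := exists c : H, b = mop a c.
Definition munit (H : cmonoid) (a : H) : Prop := exists b : H, mop a b = mone H.
Definition massoc (H : cmonoid) (b c : H) : Prop :=
  exists e : H, munit e /\ b = mop c e.

Definition is_mhom (H D : cmonoid) (phi : H -> D) : Prop :=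
  phi (mone H) = mone D /\ forall a b, phi (mop a b) = mop (phi a) (phi b).

Definition divisor_hom (H D : cmonoid) (phi : H -> D) : Prop :=
  is_mhom phi /\ forall a b, mdvd (phi a) (phi b) -> mdvd a b.

Definition fin_supp (P : Type) (f : P -> nat) : Prop :=
  exists l : list P, forall p, f p <> 0 -> List.In p l.

Definition freeCar (P : Type) := {f : P -> nat | fin_supp f}.

Lemma fin_supp_add (P : Type) (f g : P -> nat) :
  fin_supp f -> fin_supp g -> fin_supp (fun p => f p + g p).
Proof.
move=> [l1 H1] [l2 H2]; exists (l1 ++ l2)%list => p Hp.
apply/List.in_or_app; case: (f p =P 0) => Hf.
  by right; apply: H2; move: Hp; rewrite Hf.
by left; apply: H1.
Qed.

Lemma fin_supp0 (P : Type) : fin_supp (fun _ : P => 0).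
Proof. by exists nil. Qed.

Definition free_op (P : Type) (a b : freeCar P) : freeCar P :=
  exist _ _ (fin_supp_add (proj2_sig a) (proj2_sig b)).
Definition free_one (P : Type) : freeCar P := exist _ _ (@fin_supp0 P).

Lemma free_eq (P : Type) (a b : freeCar P) :
  (forall p, proj1_sig a p = proj1_sig b p) -> a = b.
Proof.
case: a b => [f hf] [g hg] /= E.
have efg : f = g by apply: functional_extensionality.
subst g; by rewrite (proof_irrelevance _ hf hg).
Qed.

Definition freeMon (P : Type) : cmonoid.
Proof.
refine (@CMonoid (freeCar P) (@free_op P) (free_one P) _ _ _ _).
- by move=> a b c; apply: free_eq => p /=; rewrite addnA.
- by move=> a b; apply: free_eq => p /=; rewrite addnC.
- by move=> a; apply: free_eq => p /=.
- move=> a b c E; apply: free_eq => p.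
  have := f_equal (fun x : freeCar P => proj1_sig x p) E => /= /eqP.
  by rewrite eqn_add2l => /eqP.
Defined.

Definition is_Krull (H : cmonoid) : Prop :=
  exists (P : Type) (phi : H -> freeMon P), divisor_hom phi.

Definition is_transfer_hom (H B : cmonoid) (theta : H -> B) : Prop :=
  is_mhom theta /\
  (forall b : B, exists u : H, exists e : B, munit e /\ b = mop (theta u) e) /\
  (forall u : H, munit (theta u) <-> munit u) /\
  (forall (u : H) (b c : B), theta u = mop b c ->
     exists v w : H, u = mop v w /\ massoc (theta v) b /\ massoc (theta w) c).

Definition is_transfer_Krull (H : cmonoid) : Prop :=
  exists (B : cmonoid) (theta : H -> B), is_Krull B /\ is_transfer_hom theta.

Section ZeroSum.
Variable gT : finGroupType.

(* F(G): multiplicity functions G -> nat *)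
Definition seqF := {ffun gT -> nat}.

Definition seq_of (S : seqF) : seq gT :=
  flatten [seq nseq (S g) g | g <- enum gT].

(* 1_G \in pi(S): some ordering of S has product 1 *)
Definition zero_sum (S : seqF) : bool :=
  has (fun s => (\prod_(x <- s) x)%g == 1%g) (permutations (seq_of S)).

Definition addF (S T : seqF) : seqF := [ffun g => S g + T g].
Definition zeroF : seqF := [ffun=> 0].

Lemma seq_of_add S T : perm_eq (seq_of (addF S T)) (seq_of S ++ seq_of T).
Proof.
apply/seq.permP => p; rewrite count_cat /seq_of !count_flatten -!map_comp.
rewrite !sumnE !big_map -big_split /=; apply: eq_bigr => g _.
by rewrite !count_nseq ffunE mulnDr.
Qed.

Lemma zero_sum_add S T : zero_sum S -> zero_sum T -> zero_sum (addF S T).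
Proof.
move=> /hasP [s1 + e1] /hasP [s2 + e2].
rewrite !mem_permutations => p1 p2.
apply/hasP; exists (s1 ++ s2).
  rewrite mem_permutations perm_sym (perm_trans (seq_of_add S T)) //.
  by rewrite perm_sym perm_cat.
by rewrite big_cat /= (eqP e1) (eqP e2) mulg1.
Qed.

Lemma zero_sum0 : zero_sum zeroF.
Proof.
rewrite /zero_sum /seq_of.
have -> : flatten [seq nseq (zeroF g) g | g <- enum gT] = [::].
  by elim: (enum gT) => //= g r ->; rewrite ffunE.
by rewrite /= big_nil eqxx.
Qed.

Definition BCar := {S : seqF | zero_sum S}.

Definition B_op (a b : BCar) : BCar :=
  exist (fun S => zero_sum S) _ (zero_sum_add (proj2_sig a) (proj2_sig b)).
Definition B_one : BCar := exist (fun S => zero_sum S) _ zero_sum0.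

Lemma B_eq (a b : BCar) : (forall g, proj1_sig a g = proj1_sig b g) -> a = b.
Proof.
case: a b => [f hf] [g hg] /= E.
have efg : f = g by apply/ffunP.
subst g; by rewrite (bool_irrelevance hf hg).
Qed.

Definition BG : cmonoid.
Proof.
refine (@CMonoid BCar B_op B_one _ _ _ _).
- by move=> a b c; apply: B_eq => p /=; rewrite !ffunE addnA.
- by move=> a b; apply: B_eq => p /=; rewrite !ffunE addnC.
- by move=> a; apply: B_eq => p /=; rewrite !ffunE.
- move=> a b c E; apply: B_eq => p.
  have := f_equal (fun x : BCar => proj1_sig x p) E => /= /eqP.
  by rewrite !ffunE eqn_add2l => /eqP.
Defined.

End ZeroSum.

(* Main.v *)
Require Import Defs.
From Stdlib Require Import Classical.
From mathcomp Require Import all_boot all_fingroup zify.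
Set Implicit Arguments. Unset Strict Implicit. Unset Printing Implicit Defensive.

Section Abstract.
Variable H : cmonoid.

Definition pw (n : nat) (a : H) : H := iter n (mop a) (mone H).

Lemma mop1r (a : H) : mop a (mone H) = a.
Proof. by rewrite mopC mop1. Qed.

Lemma pw_mul n (a b : H) : pw n (mop a b) = mop (pw n a) (pw n b).
Proof.
elim: n => [|n IH] /=; first by rewrite mop1.
rewrite /pw /= -/(pw n a) -/(pw n b) -/(pw n (mop a b)) IH.
rewrite -!mopA; congr (mop a _); rewrite !mopA; congr (mop _ _); exact: mopC.
Qed.

Lemma munit_mopl (a b : H) : munit (mop a b) -> munit a.
Proof. by case=> c e; exists (mop b c); rewrite mopA. Qed.

Lemma munit_mop (a b : H) : munit a -> munit b -> munit (mop a b).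
Proof.
case=> c ec [d ed]; exists (mop c d).
rewrite -mopA (mopA b) (mopC b c) -(mopA c) ed mop1r.
by rewrite ec.
Qed.

Lemma munit1 : munit (mone H).
Proof. by exists (mone H); rewrite mop1. Qed.

Lemma pw_unit n (a : H) : munit a -> munit (pw n a).
Proof. by move=> ua; elim: n => [|n IH] /=; [exact: munit1| exact: munit_mop]. Qed.

End Abstract.

Lemma mhom_pw (H D : cmonoid) (phi : H -> D) n a :
  is_mhom phi -> phi (pw n a) = pw n (phi a).
Proof.
case=> h1 hm; elim: n => [|n IH] //=.
by rewrite /pw /= hm -/(pw n a) IH.
Qed.

Lemma free_pw (P : Type) n (a : freeMon P) p :
  proj1_sig (pw n a) p = n * proj1_sig a p.
Proof.
elim: n => [|n IH] //=. rewrite /pw /= -/(pw n a) /=.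
by rewrite IH mulSn.
Qed.

Lemma root_closed (K : cmonoid) : is_Krull K ->
  forall n (a b c : K), 0 < n -> pw n b = mop (pw n a) c -> mdvd a b.
Proof.
move=> [P [phi [hom dv]]] n a b c n0 E; apply: dv.
have E2 := f_equal phi E.
rewrite (proj2 hom) !(mhom_pw _ _ hom) in E2.
set A := phi a in E2 *; set B := phi b in E2 *; set C := phi c in E2 *.
have le : forall p, proj1_sig A p <= proj1_sig B p.
  move=> p; have := f_equal (fun x : freeMon P => proj1_sig x p) E2.
  rewrite /= !free_pw => e.
  rewrite -(leq_pmul2l n0) e; exact: leq_addr.
have fs : fin_supp (fun p => proj1_sig B p - proj1_sig A p).
  case: (proj2_sig B) => l hl; exists l => p hp; apply: hl => e.
  by apply: hp; rewrite e.
exists (exist _ _ fs); apply: free_eq => p /=.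
by rewrite subnKC.
Qed.

Lemma transfer_contra (H K : cmonoid) (theta : H -> K) n (A B C : H) :
  is_Krull K -> is_transfer_hom theta -> 0 < n ->
  (forall v w, B = mop v w -> munit v \/ munit w) ->
  ~ munit A -> ~ munit C -> pw n B = mop (pw n A) C -> False.
Proof.
move=> KK [hom [_ [hu T2]]] n0 atom nA nC E.
have E2 := f_equal theta E.
rewrite (proj2 hom) !(mhom_pw _ _ hom) in E2.
have [k ek] := root_closed KK n0 E2.
have [v [w [ev [[e1 [ue1 hv]] [e2 [ue2 hw]]]]]] := T2 _ _ _ ek.
case: (atom _ _ ev) => [uv|uw].
  apply: nA; apply/hu.
  have := (proj2 (hu v) uv); rewrite hv; exact: munit_mopl.
have uk : munit k by have := (proj2 (hu w) uw); rewrite hw; exact: munit_mopl.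
apply: nC; apply/hu.
rewrite ek pw_mul in E2; have := mopK E2 => <-; exact: pw_unit.
Qed.


Lemma perm_cat_mask (T : eqType) (s s1 s2 : seq T) : perm_eq (s1 ++ s2) s ->
  exists m, [/\ size m = size s, perm_eq s1 (mask m s) & perm_eq s2 (mask (map negb m) s)].
Proof.
elim: s s1 s2 => [|x s IH] s1 s2 hp.
  have := perm_size hp; rewrite size_cat /= => /eqP; rewrite addn_eq0 => /andP[].
  by rewrite !size_eq0 => /eqP-> /eqP->; exists [::].
have : x \in s1 ++ s2 by rewrite (perm_mem hp) mem_head.
rewrite mem_cat => /orP[xi|xi].
  have p1 := perm_to_rem xi.
  have : perm_eq (rem x s1 ++ s2) s.
    rewrite -(perm_cons x) -cat_cons; apply: (perm_trans _ hp).
    by rewrite perm_cat2r perm_sym.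
  case/IH => m [sm q1 q2]; exists (true :: m); split => /=; first by rewrite sm.
    by rewrite (perm_trans p1) // perm_cons.
  done.
have p1 := perm_to_rem xi.
have : perm_eq (s1 ++ rem x s2) s.
  rewrite -(perm_cons x); apply: (perm_trans _ hp).
  have q : perm_eq (s1 ++ s2) (s1 ++ (x :: rem x s2)) by rewrite perm_cat2l.
  rewrite perm_sym (perm_trans q) //.
  by rewrite -cat1s perm_catCA.
case/IH => m [sm q1 q2]; exists (false :: m); split => /=; first by rewrite sm.
  done.
by rewrite (perm_trans p1) // perm_cons.
Qed.

Section BGfacts.
Variable gT : finGroupType.
Local Open Scope group_scope.

Definition Fs (s : seq gT) : seqF gT := [ffun g => count_mem g s].

Lemma count_seq_of (S : seqF gT) g : count_mem g (seq_of S) = S g.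
Proof.
rewrite /seq_of count_flatten -map_comp sumnE big_map.
rewrite (eq_bigr (fun x => ((x == g) * S x)%N)); last first.
  by move=> x _; rewrite /= count_nseq /= eq_sym.
rewrite big_enum (bigD1 g) //= eqxx mul1n big1 ?addn0 // => x /negbTE ->.
by rewrite mul0n.
Qed.

Lemma perm_seq_of_F s : perm_eq (seq_of (Fs s)) s.
Proof. apply/allP => x _ /=; by rewrite count_seq_of ffunE. Qed.

Lemma zero_sum_F s : \prod_(x <- s) x = 1 -> zero_sum (Fs s).
Proof.
move=> e; apply/hasP; exists s; last by rewrite e.
by rewrite mem_permutations perm_sym perm_seq_of_F.
Qed.

Lemma zero_sumP (S : seqF gT) : zero_sum S ->
  exists2 s, perm_eq s (seq_of S) & \prod_(x <- s) x = 1.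
Proof.
case/hasP => s hs /eqP e; exists s => //; by rewrite -mem_permutations.
Qed.

Lemma BG_unit (v : BG gT) : munit v <-> forall g, proj1_sig v g = 0.
Proof.
split.
  case=> b e g; have := f_equal (fun x : BG gT => proj1_sig x g) e.
  by rewrite /= !ffunE => /eqP; rewrite addn_eq0 => /andP[/eqP].
move=> h; exists (B_one gT); apply: B_eq => g /=; by rewrite !ffunE h.
Qed.

Lemma BG_pw n (a : BG gT) g : proj1_sig (pw n a) g = (n * proj1_sig a g)%N.
Proof.
elim: n => [|n IH] /=; first by rewrite ffunE.
by rewrite /pw /= -/(pw n a) ffunE IH mulSn.
Qed.

End BGfacts.


Section Core.
Variable gT : finGroupType.
Local Open Scope group_scope.

Lemma prod_swap (a b : gT) : a * b = 1 -> b * a = 1.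
Proof. by move/eqP; rewrite mulg_eq1 => /eqP->; rewrite mulgV. Qed.

Lemma perm_one (s : seq gT) a : perm_eq s [:: a] -> \prod_(x <- s) x = 1 -> a = 1.
Proof. by move/perm_small_eq => /(_ isT) ->; rewrite big_seq1. Qed.

Lemma perm_two (s : seq gT) a b : perm_eq s [:: a; b] -> \prod_(x <- s) x = 1 -> a * b = 1.
Proof.
move=> hp; have := perm_size hp; case: s hp => [|x [|y []]] //= hp _.
have : x \in [:: a; b] by rewrite -(perm_mem hp) mem_head.
rewrite !inE => /orP[/eqP ex|/eqP ex]; subst x.
  move: hp; rewrite perm_cons => /perm_small_eq -/(_ isT) [->].
  by rewrite !big_cons big_nil mulg1.
have hp2 : perm_eq [:: b; y] [:: b; a] by rewrite (perm_trans hp) // (perm_catC [:: a] [:: b]).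
move: hp2; rewrite perm_cons => /perm_small_eq -/(_ isT) [->].
by rewrite !big_cons big_nil mulg1 => /prod_swap.
Qed.

Lemma seq_of_count (S : seqF gT) s x : perm_eq s (seq_of S) -> S x = count_mem x s.
Proof. by move/seq.permP => /(_ (pred1 x)) ->; rewrite count_seq_of. Qed.

Lemma perm_unit0 (v : BG gT) s : perm_eq s [::] -> perm_eq s (seq_of (proj1_sig v)) -> munit v.
Proof.
move/perm_small_eq => /(_ isT) -> hv; apply/BG_unit => g.
by rewrite (seq_of_count g hv).
Qed.

Lemma count_flat_nseq n (s : seq gT) x : count_mem x (flatten (nseq n s)) = (n * count_mem x s)%N.
Proof. by elim: n => [|n IH] //=; rewrite count_cat IH mulSn. Qed.

Lemma prod_flat_nseq n (s : seq gT) : \prod_(x <- flatten (nseq n s)) x = (\prod_(x <- s) x) ^+ n.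
Proof. by elim: n => [|n IH] //=; rewrite ?big_nil // big_cat IH expgS. Qed.

Lemma core (g h : gT) : ~ commute g h -> ~ is_transfer_Krull (BG gT).
Proof.
move=> nc [K [theta [KK tr]]].
set z := g * h^-1 * g^-1.
have fg : g <> 1 by move=> e; apply: nc; rewrite e; exact: commute_sym (commute1 _).
have fh : h <> 1 by move=> e; apply: nc; rewrite e; exact: commute1.
have fgi : g^-1 <> 1 by move/eqP; rewrite invg_eq1 => /eqP.
have fz : z <> 1.
  move=> e; apply: fh; have := congr1 (fun t => g^-1 * t * g) e.
  rewrite /z !mulgA mulVg mul1g mulgKV mulg1 mulVg => /eqP.
  by rewrite invg_eq1 => /eqP.
have fgh : g * h <> 1.
  move/eqP; rewrite mulg_eq1 => /eqP e; apply: nc; rewrite e.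
  exact: commute_sym (commuteV (commute_refl h)).
have fhz : h * z <> 1.
  move=> e; apply: nc; have := congr1 (fun t => t * g * h) e.
  by rewrite /z !mulgA !mulgKV mul1g.
have fhg : h * g^-1 <> 1.
  move/eqP; rewrite divg_eq1 => /eqP e; apply: nc; rewrite e; exact: commute_refl.
pose bl := [:: g; h; g^-1; z].
pose al := [:: g; g^-1].
pose n := #[h * z].
pose cl := flatten (nseq n [:: h; z]).
have pb : \prod_(x <- bl) x = 1.
  by rewrite /bl /z !big_cons big_nil mulg1 !mulgA mulgKV mulgK mulgV.
have pa : \prod_(x <- al) x = 1 by rewrite /al !big_cons big_nil mulg1 mulgV.
have pc : \prod_(x <- cl) x = 1.
  by rewrite /cl prod_flat_nseq !big_cons big_nil mulg1 expg_order.
pose Bb : BG gT := exist (fun S => zero_sum S) _ (zero_sum_F pb).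
pose Ab : BG gT := exist (fun S => zero_sum S) _ (zero_sum_F pa).
pose Cb : BG gT := exist (fun S => zero_sum S) _ (zero_sum_F pc).
apply: (transfer_contra (n := n) (A := Ab) (B := Bb) (C := Cb) KK tr).
- exact: order_gt0.
- move=> v w ev.
  have ef : Fs bl = addF (proj1_sig v) (proj1_sig w) := f_equal (@proj1_sig _ _) ev.
  have [sv hv e1] := zero_sumP (proj2_sig v).
  have [sw hw e2] := zero_sumP (proj2_sig w).
  have : perm_eq (sv ++ sw) bl.
    apply: (perm_trans (perm_cat hv hw)).
    apply: (perm_trans _ (perm_seq_of_F bl)).
    by rewrite ef perm_sym seq_of_add.
  case/perm_cat_mask => m [sm q1 q2].
  move: sm; case: m q1 q2 => [|b1 [|b2 [|b3 [|b4 []]]]] //= q1 q2 _.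
  case: b1 q1 q2; case: b2; case: b3; case: b4 => /= q1 q2;
  try (left; exact: perm_unit0 q1 hv); try (right; exact: perm_unit0 q2 hw);
  exfalso;
  try (have E1 := perm_two q1 e1); try (have E2 := perm_two q2 e2);
  try (have E3 := perm_one q1 e1); try (have E4 := perm_one q2 e2);
  match goal with H : ?x = 1, F : ?x <> 1 |- _ => exact: (F H) end.
- move/BG_unit => /(_ g) /=; rewrite ffunE /= eqxx; lia.
- move/BG_unit => /(_ h) /=; rewrite ffunE count_flat_nseq /= eqxx.
  have n0 : 0 < n := order_gt0 _; lia.
- apply: (@B_eq gT) => x; rewrite !ffunE !BG_pw /= !ffunE count_flat_nseq /=.
  by rewrite !mulnDr !muln0 !addn0 addnACA !addnA.
Qed.
End Core.


Lemma In_mem (T : eqType) (x : T) (s : seq T) : x \in s -> List.In x s.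
Proof.
elim: s => [|y s IH] //=; rewrite inE => /orP[/eqP->|/IH]; by [left|right].
Qed.

Section Ab.
Variable gT : finGroupType.
Local Open Scope group_scope.
Hypothesis ab : forall x y : gT, commute x y.

Lemma prod_rem (t : seq gT) x : x \in t -> \prod_(y <- t) y = x * \prod_(y <- rem x t) y.
Proof.
elim: t => [|y t IH] //= ; rewrite inE big_cons.
case: eqP => [-> _|ne /= hx]; first by rewrite eqxx.
have -> : (y == x) = false by apply/eqP => e; apply: ne.
by rewrite big_cons IH // !mulgA (ab y x).
Qed.

Lemma prod_perm (s t : seq gT) : perm_eq s t -> \prod_(y <- s) y = \prod_(y <- t) y.
Proof.
elim: s t => [|x s IH] t hp.
  by have := perm_size hp; case: t hp.
have xt : x \in t by rewrite -(perm_mem hp) mem_head.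
rewrite big_cons (prod_rem xt) (IH (rem x t)) //.
by rewrite -(perm_cons x) (perm_trans hp) // perm_to_rem.
Qed.

Lemma prod_seq_of (S : seqF gT) : zero_sum S -> \prod_(y <- seq_of S) y = 1.
Proof. case/zero_sumP => s hs e; rewrite -[RHS]e; apply: prod_perm; by rewrite perm_sym. Qed.

Lemma ab_Krull : is_Krull (BG gT).
Proof.
have fs : forall S : BG gT, fin_supp (fun g => proj1_sig S g).
  by move=> S; exists (enum gT) => p _; apply: In_mem; rewrite mem_enum.
exists gT, (fun S => exist _ _ (fs S)); split.
  split; first by apply: free_eq => p /=; rewrite ffunE.
  by move=> a b; apply: free_eq => p /=; rewrite ffunE.
move=> a b [d ed].
have eb : forall p, proj1_sig b p = (proj1_sig a p + proj1_sig d p)%N.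
  by move=> p; have := f_equal (fun x : freeMon gT => proj1_sig x p) ed.
pose c : seqF gT := [ffun p => proj1_sig d p].
have ebc : proj1_sig b = addF (proj1_sig a) c by apply/ffunP => p; rewrite !ffunE eb.
have hc : zero_sum c.
  apply/hasP; exists (seq_of c); first by rewrite mem_permutations.
  have := prod_seq_of (proj2_sig b); rewrite ebc (prod_perm (seq_of_add _ _)).
  by rewrite big_cat /= (prod_seq_of (proj2_sig a)) mul1g => ->.
exists (exist (fun S => zero_sum S) c hc); apply: (@B_eq gT) => p /=.
by rewrite ffunE eb ffunE.
Qed.
End Ab.

Lemma Krull_tK (H : cmonoid) : is_Krull H -> is_transfer_Krull H.
Proof.
move=> K; exists H, id; split => //; split; first by [].
split.
  by move=> b; exists b, (mone H); split; [exact: munit1 | rewrite mop1r].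
split; first by [].
move=> u b c ->; exists b, c; split => //.
by split; exists (mone H); (split; [exact: munit1 | rewrite mop1r]).
Qed.

Theorem proposition3p4 (gT : finGroupType) :
  (abelian [set: gT] <-> is_Krull (BG gT)) /\
  (is_Krull (BG gT) <-> is_transfer_Krull (BG gT)).
Proof.
have tKab : is_transfer_Krull (BG gT) -> abelian [set: gT].
  move=> tK; apply/centsP => y _ x _.
  case: (classic (commute x y)) => // nc; exfalso; exact: core nc tK.
have abK : abelian [set: gT] -> is_Krull (BG gT).
  move/centsP => hab; apply: ab_Krull => x y.
  have := hab y (in_setT y) x (in_setT x); done.
split; split.
- exact: abK.
- by move/Krull_tK/tKab.
- exact: Krull_tK.
- by move/tKab/abK.
Qed.
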